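(* For $D\ge 1$ let $$\mathbb V(D):=\sup\Bigl\{|u(0)|^2:\ u\in H^1_{\mathrm{per}}(0,2\pi),\ \int_0^{2\pi}u(x)\,dx=0,\ \|u\|^2=1,\ \|u'\|^2=D\Bigr\}.$$ Then $$\mathbb V(D)=\frac1{2\pi}\,\frac{\Bigl(\sum_{k\in\mathbb Z_0}\frac1{\lambda+k^2}\Bigr)^2}{\sum_{k\in\mathbb Z_0}\frac1{(\lambda+k^2)^2}},$$ where $\lambda=\lambda(D)$ is the unique solution of the equation $$D(\lambda):=\frac{\sum_{k\in\mathbb Z_0}\frac{k^2}{(\lambda+k^2)^2}}{\sum_{k\in\mathbb Z_0}\frac1{(\lambda+k^2)^2}}=D .$$ Furthermore $\lambda(1)=-1$ and $\lambda(\infty)=\infty$ (i.e. $\lambda(D)\to-1$ as $D\to1$ and $\lambda(D)\to\infty$ as $D\to\infty$).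
   Context: Functions are complex-valued and $2\pi$-periodic; $\|\cdot\|$ denotes the $L_2(0,2\pi)$ norm; $\mathbb Z_0:=\mathbb Z\setminus\{0\}$; $\lambda$ ranges over $(-1,\infty)$. *)

(* Defs.v *)
From Stdlib Require Import Reals ZArith.
From Coquelicot Require Import Coquelicot.
Open Scope R_scope.

Definition zsum0 (f : Z -> R) : R :=
  Series (fun n : nat => f (Z.of_nat (S n)) + f (- Z.of_nat (S n))%Z).

Definition zsummable0 (f : Z -> R) : Prop :=
  ex_series (fun n : nat => Rabs (f (Z.of_nat (S n))) + Rabs (f (- Z.of_nat (S n))%Z)).

(* A 2pi-periodic function u is represented by its Fourier coefficients
   c : Z -> C, u(x) = sum_k c k e^{ikx}.  u in H^1_per(0,2pi) with zero mean
   iff c 0 = 0, sum |c_k|^2 < oo and sum k^2 |c_k|^2 < oo. *)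
Definition H1per_mean0 (c : Z -> C) : Prop :=
  c 0%Z = 0%C /\
  zsummable0 (fun k => (Cmod (c k))^2) /\
  zsummable0 (fun k => (IZR k)^2 * (Cmod (c k))^2).

(* ||u||^2 and ||u'||^2 in L_2(0,2pi) (Parseval) *)
Definition L2norm2 (c : Z -> C) : R := 2 * PI * zsum0 (fun k => (Cmod (c k))^2).
Definition L2norm2_deriv (c : Z -> C) : R :=
  2 * PI * zsum0 (fun k => (IZR k)^2 * (Cmod (c k))^2).

(* pointwise value of the (continuous representative of the) function *)
Definition fourier_eval (c : Z -> C) (x : R) : C :=
  (zsum0 (fun k => Re (c k * (cos (IZR k * x), sin (IZR k * x)))%C),
   zsum0 (fun k => Im (c k * (cos (IZR k * x), sin (IZR k * x)))%C)).

Definition VV (D : R) : Rbar :=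
  Lub_Rbar (fun v => exists c : Z -> C,
     H1per_mean0 c /\ L2norm2 c = 1 /\ L2norm2_deriv c = D /\
     v = (Cmod (fourier_eval c 0))^2).

Definition Dfun (l : R) : R :=
  zsum0 (fun k => (IZR k)^2 / (l + (IZR k)^2)^2) /
  zsum0 (fun k => 1 / (l + (IZR k)^2)^2).

Definition Vformula (l : R) : R :=
  / (2 * PI) * (zsum0 (fun k => 1 / (l + (IZR k)^2)))^2 /
  zsum0 (fun k => 1 / (l + (IZR k)^2)^2).

(* Main.v *)
Require Import Defs.
From Stdlib Require Import Reals ZArith Lra Psatz.
From Coquelicot Require Import Coquelicot.
Open Scope R_scope.

Definition kk (n : nat) : R := INR n + 1.

Lemma kk_ge1 n : 1 <= kk n.
Proof. unfold kk. pose proof (pos_INR n). lra. Qed.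

Lemma kk_sq_ge1 n : 1 <= kk n ^ 2.
Proof. pose proof (kk_ge1 n). nra. Qed.

Lemma IZR_pos n : IZR (Z.of_nat (S n)) = kk n.
Proof. rewrite <- INR_IZR_INZ, S_INR. reflexivity. Qed.

Lemma IZR_neg n : IZR (- Z.of_nat (S n)) = - kk n.
Proof. rewrite opp_IZR, IZR_pos. reflexivity. Qed.

Lemma ex_series_cmp (a b : nat -> R) :
  (forall n, Rabs (a n) <= b n) -> ex_series b -> ex_series a.
Proof. intros H Hb. apply (ex_series_le a b); auto. Qed.

Lemma Series_zero : Series (fun _ => 0) = 0.
Proof.
  transitivity (Series (fun n:nat => 0 * 0)). 2: rewrite Series_scal_l; ring.
  apply Series_ext. intros; ring.
Qed.

Lemma Series_nonneg (a : nat -> R) : (forall n, 0 <= a n) -> ex_series a -> 0 <= Series a.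
Proof.
  intros H E.
  pose proof (Series_le (fun _ => 0) a (fun n => conj (Rle_refl 0) (H n)) E).
  rewrite Series_zero in H0. exact H0.
Qed.

Lemma Series_mono (a b : nat -> R) : (forall n, a n <= b n) -> ex_series a -> ex_series b ->
  Series a <= Series b.
Proof.
  intros H Ea Eb. assert (0 <= Series (fun n => b n - a n)).
  { apply Series_nonneg. intros n; specialize (H n); lra.
    apply (ex_series_minus b a Eb Ea). }
  rewrite Series_minus in H0; auto. lra.
Qed.

Lemma Series_ge_first2 (a : nat -> R) : (forall n, 0 <= a n) -> ex_series a ->
  a 0%nat + a 1%nat <= Series a.
Proof.
  intros H E. rewrite Series_incr_1 by auto.
  assert (E1 : ex_series (fun k => a (S k))) by exact (proj1 (ex_series_incr_1 a) E).
  rewrite (Series_incr_1 (fun k => a (S k))) by exact E1.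
  assert (0 <= Series (fun k => a (S (S k)))).
  { apply Series_nonneg. intros; auto. exact (proj1 (ex_series_incr_1 _) E1). }
  lra.
Qed.

Lemma Series_ge_first (a : nat -> R) : (forall n, 0 <= a n) -> ex_series a ->
  a 0%nat <= Series a.
Proof. intros H E. pose proof (Series_ge_first2 a H E). pose proof (H 1%nat). lra. Qed.

Lemma partial_tel N :
  sum_f_R0 (fun n => / kk n - / kk (S n)) N = 1 - / kk (S N).
Proof.
  induction N; simpl sum_f_R0.
  - unfold kk; simpl. field. 
  - rewrite IHN. ring.
Qed.

Lemma ex_series_tel : ex_series (fun n => / kk n - / kk (S n)).
Proof.
  exists 1. apply is_series_Reals. intros eps Heps.
  destruct (INR_unbounded (/ eps)) as [N HN].
  exists N. intros n Hn. rewrite partial_tel. unfold R_dist.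
  pose proof (kk_ge1 (S n)).
  assert (INR N <= INR n) by (apply le_INR; lia).
  assert (kk (S n) > / eps). { unfold kk. rewrite S_INR. lra. }
  replace (1 - / kk (S n) - 1) with (- / kk (S n)) by ring.
  rewrite Rabs_Ropp, Rabs_right by (left; apply Rinv_0_lt_compat; lra).
  rewrite <- (Rinv_inv eps). apply Rinv_lt_contravar; auto.
  apply Rmult_lt_0_compat; auto. apply Rinv_0_lt_compat; lra.
  lra.
Qed.

Lemma ex_series_invsq : ex_series (fun n => / kk n ^ 2).
Proof.
  apply (ex_series_cmp _ (fun n => 2 * (/ kk n - / kk (S n)))).
  2: { apply (ex_series_scal_l 2 _ ex_series_tel). }
  intros n. pose proof (kk_ge1 n). assert (kk (S n) = kk n + 1) by (unfold kk; rewrite S_INR; ring).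
  rewrite H0. rewrite Rabs_right by (left; apply Rinv_0_lt_compat; nra).
  replace (/ kk n - / (kk n + 1)) with (/ (kk n * (kk n + 1))) by (field; lra).
  apply Rmult_le_reg_l with (kk n ^2 * (kk n * (kk n + 1))). 
  { apply Rmult_lt_0_compat; nra. }
  field_simplify; try nra.
Qed.


Definition a (l : R) (n : nat) : R := / (l + kk n ^ 2).
Definition s1 (l : R) : R := Series (a l).
Definition s2 (l : R) : R := Series (fun n => a l n ^ 2).
Definition NN (l : R) : R := Series (fun n => kk n ^ 2 * a l n ^ 2).
Definition FF (l : R) : R := s1 l / s2 l - l.
Definition mm (l : R) : R := Rmin 1 (l + 1).

Lemma w_pos l n : -1 < l -> 0 < l + kk n ^ 2.
Proof. intros. pose proof (kk_sq_ge1 n). lra. Qed.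

Lemma mm_pos l : -1 < l -> 0 < mm l.
Proof. intros. unfold mm. apply Rmin_glb_lt; lra. Qed.

Lemma w_lb l n : -1 < l -> mm l * kk n ^ 2 <= l + kk n ^ 2.
Proof.
  intros. pose proof (kk_sq_ge1 n). unfold mm.
  destruct (Rle_dec 0 l).
  - assert (Rmin 1 (l+1) <= 1) by apply Rmin_l. nra.
  - assert (Rmin 1 (l+1) <= l + 1) by apply Rmin_r.
    assert (0 < Rmin 1 (l+1)) by (apply Rmin_glb_lt; lra). nra.
Qed.

Lemma a_pos l n : -1 < l -> 0 < a l n.
Proof. intros. unfold a. apply Rinv_0_lt_compat, w_pos; auto. Qed.

Lemma a_w l n : -1 < l -> a l n * (l + kk n ^ 2) = 1.
Proof. intros. unfold a. field. pose proof (w_pos l n H). lra. Qed.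

Lemma a_le_inv l n : -1 < l -> a l n <= / mm l * / kk n ^ 2.
Proof.
  intros. unfold a. rewrite <- Rinv_mult. apply Rinv_le_contravar.
  - pose proof (mm_pos l H). pose proof (kk_sq_ge1 n). nra.
  - apply w_lb; auto.
Qed.

Lemma a_le1 l n : -1 < l -> a l n <= / (l + 1).
Proof.
  intros. unfold a. apply Rinv_le_contravar. lra. pose proof (kk_sq_ge1 n). lra.
Qed.

Lemma ex_a l : -1 < l -> ex_series (a l).
Proof.
  intros. apply (ex_series_cmp _ (fun n => / mm l * / kk n ^ 2)).
  - intros n. rewrite Rabs_right by (left; apply a_pos; auto). apply a_le_inv; auto.
  - apply (ex_series_scal_l (/ mm l) _ ex_series_invsq).
Qed.

Lemma ex_a2 l : -1 < l -> ex_series (fun n => a l n ^ 2).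
Proof.
  intros. apply (ex_series_cmp _ (fun n => / (l+1) * a l n)).
  - intros n. pose proof (a_pos l n H). pose proof (a_le1 l n H).
    rewrite Rabs_right by (left; nra). nra.
  - apply (ex_series_scal_l (/ (l+1)) _ (ex_a l H)).
Qed.

Lemma ka2_eq l n : -1 < l -> kk n ^ 2 * a l n ^ 2 = a l n - l * a l n ^ 2.
Proof. intros. pose proof (a_w l n H). 
  replace (kk n ^ 2) with ((l + kk n ^2) - l) by ring. 
  transitivity (a l n * (a l n * (l + kk n ^ 2)) - l * a l n ^ 2). ring. rewrite H0. ring. Qed.

Lemma ex_ka2 l : -1 < l -> ex_series (fun n => kk n ^ 2 * a l n ^ 2).
Proof.
  intros. apply ex_series_ext with (a := fun n => a l n - l * a l n ^ 2).
  intros; symmetry; apply ka2_eq; auto.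
  apply (ex_series_minus (a l) (fun n => l * a l n ^ 2)). apply ex_a; auto.
  apply (ex_series_scal_l l _ (ex_a2 l H)).
Qed.

Lemma NN_eq l : -1 < l -> NN l = s1 l - l * s2 l.
Proof.
  intros. unfold NN, s1, s2. rewrite <- Series_scal_l, <- Series_minus.
  apply Series_ext. intros; apply ka2_eq; auto.
  apply ex_a; auto. apply (ex_series_scal_l l _ (ex_a2 l H)).
Qed.

Lemma s1_pos l : -1 < l -> 0 < s1 l.
Proof. intros. unfold s1. pose proof (Series_ge_first (a l) (fun n => Rlt_le _ _ (a_pos l n H)) (ex_a l H)).
  pose proof (a_pos l 0 H). lra. Qed.

Lemma s2_ge l : -1 < l -> a l 0 ^ 2 <= s2 l.
Proof. intros. unfold s2. apply (Series_ge_first (fun n => a l n ^ 2)).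
  intros n; pose proof (a_pos l n H); nra. apply ex_a2; auto. Qed.

Lemma s2_pos l : -1 < l -> 0 < s2 l.
Proof. intros. pose proof (s2_ge l H). pose proof (a_pos l 0 H). nra. Qed.

Lemma zsum0_even (g : R -> R) : (forall x, g (- x) = g x) ->
  zsum0 (fun k => g (IZR k)) = 2 * Series (fun n => g (kk n)).
Proof.
  intros Hg. unfold zsum0. rewrite <- Series_scal_l. apply Series_ext. intros n.
  rewrite IZR_pos, IZR_neg, Hg. ring.
Qed.

Lemma Dfun_eq l : -1 < l -> Dfun l = FF l.
Proof.
  intros. unfold Dfun.
  rewrite (zsum0_even (fun x => x ^ 2 / (l + x ^ 2) ^ 2)) by (intros x; replace ((-x)^2) with (x^2) by ring; reflexivity).
  rewrite (zsum0_even (fun x => 1 / (l + x ^ 2) ^ 2)) by (intros x; replace ((-x)^2) with (x^2) by ring; reflexivity).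
  unfold FF. pose proof (s2_pos l H).
  replace (s1 l / s2 l - l) with (NN l / s2 l) by (rewrite NN_eq; auto; field; lra).
  replace (Series (fun n => kk n ^ 2 / (l + kk n ^ 2) ^ 2)) with (NN l).
  replace (Series (fun n => 1 / (l + kk n ^ 2) ^ 2)) with (s2 l).
  field. lra.
  unfold s2, a; apply Series_ext; intros n; pose proof (w_pos l n H); field; lra.
  unfold NN, a; apply Series_ext; intros n; pose proof (w_pos l n H); field; lra.
Qed.

Lemma Vformula_eq l : -1 < l -> Vformula l = s1 l ^ 2 / (PI * s2 l).
Proof.
  intros. unfold Vformula.
  rewrite (zsum0_even (fun x => 1 / (l + x ^ 2))) by (intros x; replace ((-x)^2) with (x^2) by ring; reflexivity).
  rewrite (zsum0_even (fun x => 1 / (l + x ^ 2) ^ 2)) by (intros x; replace ((-x)^2) with (x^2) by ring; reflexivity).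
  pose proof (s2_pos l H). pose proof PI_RGT_0.
  replace (Series (fun n => 1 / (l + kk n ^ 2))) with (s1 l).
  replace (Series (fun n => 1 / (l + kk n ^ 2) ^ 2)) with (s2 l).
  field. lra.
  unfold s2, a; apply Series_ext; intros n; pose proof (w_pos l n H); field; lra.
  unfold s1, a; apply Series_ext; intros n; pose proof (w_pos l n H); field; lra.
Qed.


Lemma kk0 : kk 0 = 1. Proof. unfold kk; simpl; ring. Qed.
Lemma kk1 : kk 1 = 2. Proof. unfold kk; simpl; ring. Qed.

Lemma strict_quad l1 l2 al : -1 < l1 -> -1 < l2 -> l1 <> l2 ->
  0 < l1 * s2 l2 + NN l2 - 2 * al * s1 l2 + al ^ 2 * s1 l1.
Proof.
  intros H1 H2 Hne.
  set (t := fun n => (l1 + kk n ^ 2) * (a l2 n - al * a l1 n) ^ 2).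
  assert (Ht : forall n, 0 <= t n).
  { intros n. unfold t. pose proof (w_pos l1 n H1). apply Rmult_le_pos; [lra| apply pow2_ge_0]. }
  assert (Eq : forall n, t n = (l1 * a l2 n ^ 2 + kk n ^ 2 * a l2 n ^ 2) + ((- 2 * al) * a l2 n + al ^ 2 * a l1 n)).
  { intros n. unfold t. pose proof (a_w l1 n H1).
    transitivity ((l1 * a l2 n ^ 2 + kk n ^ 2 * a l2 n ^ 2) + ((- 2 * al) * a l2 n * (a l1 n * (l1 + kk n ^ 2))
        + al ^ 2 * a l1 n * (a l1 n * (l1 + kk n ^ 2)))). ring. rewrite H. ring. }
  assert (E1 : ex_series (fun n => l1 * a l2 n ^ 2)) by exact (ex_series_scal_l l1 _ (ex_a2 l2 H2)).
  assert (E2 : ex_series (fun n => (- 2 * al) * a l2 n)) by exact (ex_series_scal_l _ _ (ex_a l2 H2)).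
  assert (E3 : ex_series (fun n => al ^ 2 * a l1 n)) by exact (ex_series_scal_l _ _ (ex_a l1 H1)).
  assert (E4 := ex_ka2 l2 H2).
  assert (E12 : ex_series (fun n => l1 * a l2 n ^ 2 + kk n ^ 2 * a l2 n ^ 2)) by exact (ex_series_plus _ _ E1 E4).
  assert (E23 : ex_series (fun n => (- 2 * al) * a l2 n + al ^ 2 * a l1 n)) by exact (ex_series_plus _ _ E2 E3).
  assert (Et : ex_series t).
  { eapply ex_series_ext. intros n; symmetry; apply Eq. exact (ex_series_plus _ _ E12 E23). }
  assert (Hser : Series t = l1 * s2 l2 + NN l2 - 2 * al * s1 l2 + al ^ 2 * s1 l1).
  { rewrite (Series_ext _ _ Eq). rewrite Series_plus by auto. rewrite !Series_plus by auto.
    rewrite !Series_scal_l. unfold s2, NN, s1. ring. }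
  rewrite <- Hser.
  apply Rlt_le_trans with (t 0%nat + t 1%nat). 2: apply Series_ge_first2; auto.
  destruct (Rle_lt_dec (t 0%nat + t 1%nat) 0) as [Hle|Hlt]; auto.
  exfalso. assert (T0 : t 0%nat = 0) by (pose proof (Ht 0%nat); pose proof (Ht 1%nat); lra).
  assert (T1 : t 1%nat = 0) by (pose proof (Ht 0%nat); pose proof (Ht 1%nat); lra).
  unfold t in T0, T1.
  pose proof (w_pos l1 0 H1). pose proof (w_pos l1 1 H1).
  apply Rmult_integral in T0. apply Rmult_integral in T1.
  destruct T0 as [T0|T0]; [lra|]. destruct T1 as [T1|T1]; [lra|].
  assert (T0' : a l2 0 - al * a l1 0 = 0) by nra. assert (T1' : a l2 1 - al * a l1 1 = 0) by nra.
  clear T0 T1.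
  pose proof (a_w l1 0 H1). pose proof (a_w l1 1 H1). pose proof (a_w l2 0 H2). pose proof (a_w l2 1 H2).
  rewrite kk0 in *. rewrite kk1 in *.
  assert (A0 : a l2 0 = al * a l1 0) by lra. assert (A1 : a l2 1 = al * a l1 1) by lra.
  assert (l1 + 1 = al * (l2 + 1)).
  { transitivity (a l2 0 * (l2 + 1 ^ 2) * (l1 + 1)). rewrite H5; ring.
    rewrite A0. transitivity (al * (l2 + 1) * (a l1 0 * (l1 + 1 ^ 2))). ring. rewrite H3; ring. }
  assert (l1 + 4 = al * (l2 + 4)).
  { transitivity (a l2 1 * (l2 + 2 ^ 2) * (l1 + 4)). rewrite H6; ring.
    rewrite A1. transitivity (al * (l2 + 4) * (a l1 1 * (l1 + 2 ^ 2))). ring. rewrite H4; ring. }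
  nra.
Qed.

Lemma FF_ineq l1 l2 : -1 < l1 -> -1 < l2 -> l1 <> l2 ->
  s1 l2 * (FF l2 + l2) < s1 l1 * (l1 + FF l2).
Proof.
  intros H1 H2 Hne.
  pose proof (strict_quad l1 l2 (s1 l2 / s1 l1) H1 H2 Hne).
  rewrite NN_eq in H by auto.
  pose proof (s1_pos l1 H1). pose proof (s1_pos l2 H2). pose proof (s2_pos l2 H2).
  unfold FF.
  apply Rmult_lt_reg_l with (s2 l2 / s1 l1). apply Rdiv_lt_0_compat; auto.
  replace (s2 l2 / s1 l1 * (s1 l2 * (s1 l2 / s2 l2 - l2 + l2))) with (s1 l2 ^ 2 / s1 l1) by (field; lra).
  replace (s2 l2 / s1 l1 * (s1 l1 * (l1 + (s1 l2 / s2 l2 - l2)))) with (s2 l2 * (l1 - l2) + s1 l2) by (field; lra).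
  replace (l1 * s2 l2 + (s1 l2 - l2 * s2 l2) - 2 * (s1 l2 / s1 l1) * s1 l2 + (s1 l2 / s1 l1) ^ 2 * s1 l1)
    with (s2 l2 * (l1 - l2) + s1 l2 - s1 l2 ^ 2 / s1 l1) in H by (field; lra).
  lra.
Qed.

Lemma FF_l_pos l : -1 < l -> 0 < FF l + l.
Proof. intros. unfold FF. pose proof (s1_pos l H). pose proof (s2_pos l H).
  replace (s1 l / s2 l - l + l) with (s1 l / s2 l) by ring. apply Rdiv_lt_0_compat; auto. Qed.

Lemma FF_mono l1 l2 : -1 < l1 -> l1 < l2 -> FF l1 < FF l2.
Proof.
  intros H1 H12. assert (H2 : -1 < l2) by lra. assert (Hne : l1 <> l2) by lra.
  pose proof (FF_ineq l1 l2 H1 H2 Hne) as A.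
  pose proof (FF_ineq l2 l1 H2 H1 (not_eq_sym Hne)) as B.
  pose proof (s1_pos l1 H1). pose proof (s1_pos l2 H2).
  pose proof (FF_l_pos l1 H1). pose proof (FF_l_pos l2 H2).
  set (P1 := s1 l1) in *. set (P2 := s1 l2) in *. set (F1 := FF l1) in *. set (F2 := FF l2) in *.
  assert (0 < l1 + F2) by nra. assert (0 < l2 + F1) by nra.
  assert (P1 * P2 * ((F2 + l2) * (F1 + l1)) < P1 * P2 * ((l1 + F2) * (l2 + F1))).
  { replace (P1 * P2 * ((F2 + l2) * (F1 + l1))) with ((P2 * (F2 + l2)) * (P1 * (F1 + l1))) by ring.
    replace (P1 * P2 * ((l1 + F2) * (l2 + F1))) with ((P1 * (l1 + F2)) * (P2 * (l2 + F1))) by ring.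
    apply Rmult_le_0_lt_compat; nra. }
  assert ((F2 + l2) * (F1 + l1) < (l1 + F2) * (l2 + F1)).
  { apply Rmult_lt_reg_l with (P1 * P2). nra. lra. }
  nra.
Qed.


Lemma lip_cont (f : R -> R) x0 d K : 0 < d -> 0 <= K ->
  (forall x, Rabs (x - x0) < d -> Rabs (f x - f x0) <= K * Rabs (x - x0)) ->
  continuity_pt f x0.
Proof.
  intros Hd HK H. unfold continuity_pt, continue_in, limit1_in, limit_in.
  intros eps Heps. exists (Rmin d (eps / (K + 1))). split.
  { apply Rmin_glb_lt; auto. apply Rdiv_lt_0_compat; lra. }
  intros x [_ Hx]. simpl in *. unfold R_dist in *.
  assert (Hx1 : Rabs (x - x0) < d) by (eapply Rlt_le_trans; [exact Hx| apply Rmin_l]).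
  assert (Hx2 : Rabs (x - x0) < eps / (K + 1)) by (eapply Rlt_le_trans; [exact Hx| apply Rmin_r]).
  specialize (H x Hx1). pose proof (Rabs_pos (x - x0)).
  apply Rle_lt_trans with (K * Rabs (x - x0)); auto.
  apply Rle_lt_trans with ((K+1) * Rabs (x - x0)). nra.
  apply Rmult_lt_reg_r with (/ (K+1)). apply Rinv_0_lt_compat; lra.
  replace ((K + 1) * Rabs (x - x0) * / (K + 1)) with (Rabs (x - x0)) by (field; lra). exact Hx2.
Qed.

Lemma Series_diff_bound (u v g : nat -> R) c :
  (forall n, Rabs (u n - v n) <= c * g n) -> ex_series u -> ex_series v -> ex_series g ->
  Rabs (Series u - Series v) <= c * Series g.
Proof.
  intros H Eu Ev Eg. rewrite <- Series_minus by auto.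
  assert (Eg' : ex_series (fun n => c * g n)) by exact (ex_series_scal_l c g Eg).
  assert (E : ex_series (fun n => Rabs (u n - v n))).
  { apply (ex_series_cmp _ (fun n => c * g n)); auto. intros n. rewrite Rabs_Rabsolu. auto. }
  eapply Rle_trans. apply Series_Rabs; auto.
  rewrite <- Series_scal_l. apply Series_mono; auto.
Qed.

Lemma a_mono l x n : -1 < l -> l <= x -> a x n <= a l n.
Proof. intros. unfold a. apply Rinv_le_contravar. apply w_pos; auto. lra. Qed.

Lemma a_diff x y n : -1 < x -> -1 < y -> a x n - a y n = (y - x) * a x n * a y n.
Proof. intros. unfold a. pose proof (w_pos x n H). pose proof (w_pos y n H0). field. lra. Qed.

Lemma s1_cont x0 : -1 < x0 -> continuity_pt s1 x0.
Proof.
  intros H. set (lb := (x0 - 1) / 2). assert (Hlb : -1 < lb) by (unfold lb; lra).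
  apply (lip_cont s1 x0 ((x0 + 1)/2) (s2 lb)). lra. left; apply s2_pos; auto.
  intros x Hx. assert (Hxl : lb <= x) by (unfold lb; apply Rabs_lt_between in Hx; lra).
  assert (Hx1 : -1 < x) by lra.
  rewrite Rmult_comm. apply Series_diff_bound.
  - intros n. rewrite a_diff by lra. 
    pose proof (a_pos x n Hx1). pose proof (a_pos x0 n H).
    pose proof (a_mono lb x n Hlb Hxl). pose proof (a_mono lb x0 n Hlb ltac:(unfold lb; lra)).
    rewrite Rabs_mult, Rabs_mult, (Rabs_right (a x n)), (Rabs_right (a x0 n)) by lra.
    rewrite <- Rabs_Ropp. replace (- (x0 - x)) with (x - x0) by ring.
    pose proof (Rabs_pos (x - x0)). 
    rewrite Rmult_assoc. apply Rmult_le_compat_l. auto. simpl. 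
    rewrite Rmult_1_r. apply Rmult_le_compat; lra.
  - apply ex_a; auto.
  - apply ex_a; auto.
  - apply ex_a2; auto.
Qed.

Lemma s2_cont x0 : -1 < x0 -> continuity_pt s2 x0.
Proof.
  intros H. set (lb := (x0 - 1) / 2). assert (Hlb : -1 < lb) by (unfold lb; lra).
  apply (lip_cont s2 x0 ((x0 + 1)/2) (2 / (lb + 1) * s2 lb)). lra.
  { pose proof (s2_pos lb Hlb). apply Rmult_le_pos; [|lra]. apply Rlt_le, Rdiv_lt_0_compat; lra. }
  intros x Hx. assert (Hxl : lb <= x) by (unfold lb; apply Rabs_lt_between in Hx; lra).
  assert (Hx1 : -1 < x) by lra.
  replace (2 / (lb + 1) * s2 lb * Rabs (x - x0)) with ((Rabs (x - x0) * (2 / (lb + 1))) * s2 lb) by ring.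
  apply Series_diff_bound.
  - intros n. replace (a x n ^ 2 - a x0 n ^ 2) with ((a x n - a x0 n) * (a x n + a x0 n)) by ring.
    rewrite a_diff by lra. 
    pose proof (a_pos x n Hx1). pose proof (a_pos x0 n H).
    pose proof (a_mono lb x n Hlb Hxl). pose proof (a_mono lb x0 n Hlb ltac:(unfold lb; lra)).
    pose proof (a_le1 lb n Hlb).
    rewrite Rabs_mult, Rabs_mult, Rabs_mult, (Rabs_right (a x n)), (Rabs_right (a x0 n)), (Rabs_right (a x n + a x0 n)) by lra.
    rewrite <- Rabs_Ropp. replace (- (x0 - x)) with (x - x0) by ring.
    pose proof (Rabs_pos (x - x0)). 
    rewrite !Rmult_assoc. apply Rmult_le_compat_l. auto.
    assert (a x n * a x0 n <= a lb n ^ 2) by (simpl; rewrite Rmult_1_r; apply Rmult_le_compat; lra).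
    assert (a x n + a x0 n <= 2 / (lb + 1)) by (unfold Rdiv; lra).
    replace (a x n * (a x0 n * (a x n + a x0 n))) with ((a x n * a x0 n) * (a x n + a x0 n)) by ring.
    replace (2 / (lb + 1) * a lb n ^ 2) with (a lb n ^ 2 * (2 / (lb + 1))) by ring.
    apply Rmult_le_compat; try nra.
  - apply ex_a2; auto.
  - apply ex_a2; auto.
  - apply ex_a2; auto.
Qed.

Lemma FF_cont x0 : -1 < x0 -> continuity_pt FF x0.
Proof.
  intros H. unfold FF.
  apply (continuity_pt_minus (fun l => s1 l / s2 l) (fun l => l)).
  apply (continuity_pt_div s1 s2). apply s1_cont; auto. apply s2_cont; auto.
  pose proof (s2_pos x0 H); lra. apply continuity_pt_id.
Qed.


Definition ZZ := Series (fun n => / kk n ^ 2).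

Lemma invsq_pos n : 0 < / kk n ^ 2.
Proof. apply Rinv_0_lt_compat. pose proof (kk_sq_ge1 n); lra. Qed.

Lemma ZZ_pos : 0 <= ZZ.
Proof. apply Series_nonneg. intros; left; apply invsq_pos. apply ex_series_invsq. Qed.

Lemma FF_NN l : -1 < l -> FF l = NN l / s2 l.
Proof. intros. rewrite NN_eq by auto. unfold FF. pose proof (s2_pos l H). field. lra. Qed.

Lemma NN_minus l : -1 < l -> NN l - s2 l = Series (fun n => (kk n ^ 2 - 1) * a l n ^ 2).
Proof.
  intros. unfold NN, s2. rewrite <- Series_minus. apply Series_ext; intros; ring.
  apply ex_ka2; auto. apply ex_a2; auto.
Qed.

Lemma ex_km1 l : -1 < l -> ex_series (fun n => (kk n ^ 2 - 1) * a l n ^ 2).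
Proof.
  intros. eapply ex_series_ext. 2: exact (ex_series_minus _ _ (ex_ka2 l H) (ex_a2 l H)).
  intros; simpl; unfold plus, opp; simpl; ring.
Qed.

Lemma km1_nonneg l n : (0 <= (kk n ^ 2 - 1) * a l n ^ 2).
Proof. pose proof (kk_sq_ge1 n). apply Rmult_le_pos. lra. apply pow2_ge_0. Qed.

Lemma FF_gt1 l : -1 < l -> 1 < FF l.
Proof.
  intros. rewrite FF_NN by auto. pose proof (s2_pos l H).
  assert (0 < NN l - s2 l).
  { rewrite NN_minus by auto.
    eapply Rlt_le_trans. 2: apply Series_ge_first2; [intros; apply km1_nonneg| apply ex_km1; auto].
    cbv beta. rewrite kk0, kk1. pose proof (a_pos l 1 H). nra. }
  apply Rmult_lt_reg_r with (s2 l); auto. unfold Rdiv. rewrite Rmult_assoc, Rinv_l by lra. lra.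
Qed.

Lemma km1_bound l n : -1 < l -> (kk n ^ 2 - 1) * a l n ^ 2 <= 2 * / kk n ^ 2.
Proof.
  intros H. destruct n.
  - rewrite kk0. pose proof (invsq_pos 0). rewrite kk0 in H0. nra.
  - assert (Hk : 2 <= kk (S n)) by (unfold kk; rewrite S_INR; pose proof (pos_INR n); lra).
    set (K := kk (S n) ^ 2). assert (HK : 4 <= K) by (unfold K; nra).
    pose proof (a_w l (S n) H). fold K in H0. pose proof (a_pos l (S n) H).
    set (x := a l (S n)) in *.
    assert (x * (K - 1) <= 1) by nra.
    assert (x <= / (K - 1)).
    { apply Rmult_le_reg_r with (K - 1). lra. rewrite Rinv_l by lra. lra. }
    assert (/ (K - 1) <= 2 * / K).
    { apply Rmult_le_reg_r with (K * (K-1)). nra. 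
      replace (/ (K - 1) * (K * (K - 1))) with K by (field; lra).
      replace (2 * / K * (K * (K - 1))) with (2 * (K - 1)) by (field; lra). lra. }
    nra.
Qed.

Lemma FF_near l : -1 < l -> FF l - 1 <= 2 * ZZ * (l + 1) ^ 2.
Proof.
  intros H. pose proof (s2_pos l H). pose proof (s2_ge l H).
  assert (Hn : NN l - s2 l <= 2 * ZZ).
  { rewrite NN_minus by auto. unfold ZZ. rewrite <- Series_scal_l. apply Series_mono.
    intros; apply km1_bound; auto. apply ex_km1; auto. apply (ex_series_scal_l 2 _ ex_series_invsq). }
  rewrite FF_NN by auto.
  unfold a in H1. rewrite kk0 in H1.
  assert (0 < l + 1) by lra.
  assert (E: (/ (l + 1 ^ 2)) ^ 2 * (l+1)^2 = 1) by (field; lra).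
  assert (NN l / s2 l - 1 = (NN l - s2 l) / s2 l) by (field; lra). rewrite H3.
  pose proof ZZ_pos.
  apply Rmult_le_reg_r with (s2 l); auto. unfold Rdiv. rewrite Rmult_assoc, Rinv_l, Rmult_1_r by lra.
  apply Rle_trans with (2 * ZZ). auto.
  assert (1 <= (l+1)^2 * s2 l).
  { apply Rle_trans with ((/ (l+1^2))^2 * (l+1)^2). rewrite E; lra.
    replace ((l+1)^2 * s2 l) with (s2 l * (l+1)^2) by ring. apply Rmult_le_compat_r. apply pow2_ge_0. auto. }
  nra.
Qed.

Lemma sum_ge_last (u : nat -> R) M : (forall n, 0 <= u n) -> u M <= sum_f_R0 u M.
Proof.
  intros H. destruct M; simpl. lra. pose proof (cond_pos_sum u M H). lra.
Qed.

Lemma kk_mono m n : (m <= n)%nat -> kk m <= kk n.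
Proof. intros. unfold kk. apply le_INR in H. lra. Qed.

Lemma FF_big M : kk M / 5 <= FF (kk M ^ 2).
Proof.
  set (L := kk M). assert (HL : 1 <= L) by apply kk_ge1.
  set (l := L ^ 2). assert (Hl : -1 < l) by (unfold l; nra).
  assert (Hl0 : 1 <= l) by (unfold l; nra).
  rewrite FF_NN by auto.
  set (u := fun n => kk n ^ 2 * a l n ^ 2).
  assert (Hu : forall n, 0 <= u n) by (intros; unfold u; apply Rmult_le_pos; apply pow2_ge_0).
  assert (EN : NN l = sum_f_R0 u M + Series (fun j => u (S M + j)%nat)).
  { unfold NN. apply (Series_incr_n u (S M)). lia. apply ex_ka2; auto. }
  assert (ES : s2 l = sum_f_R0 (fun n => a l n ^ 2) M + Series (fun j => a l (S M + j)%nat ^ 2)).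
  { unfold s2. apply (Series_incr_n (fun n => a l n ^ 2) (S M)). lia. apply ex_a2; auto. }
  assert (Etail : ex_series (fun j => u (S M + j)%nat)).
  { apply (ex_series_incr_n u (S M)). apply ex_ka2; auto. }
  assert (Etail2 : ex_series (fun j => a l (S M + j)%nat ^ 2)).
  { apply (ex_series_incr_n (fun n => a l n ^ 2) (S M)). apply ex_a2; auto. }
  assert (Htail_nn : 0 <= Series (fun j => u (S M + j)%nat)) by (apply Series_nonneg; auto).
  assert (Hsum_nn : 0 <= sum_f_R0 u M) by (apply cond_pos_sum; auto).
  assert (HuM : u M = / (4 * L ^ 2)).
  { unfold u, a, l, L; cbv beta. pose proof (kk_ge1 M). assert (kk M <> 0) by lra. field. split; [auto| nra]. }
  assert (HN1 : / (4 * L ^ 2) <= NN l).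
  { rewrite EN, <- HuM. pose proof (sum_ge_last u M Hu). lra. }
  assert (HP : sum_f_R0 (fun n => a l n ^ 2) M <= / l ^ 2 * L).
  { apply Rle_trans with (sum_f_R0 (fun _ => / l ^ 2) M).
    - apply sum_Rle. intros n _. pose proof (a_pos l n Hl).
      assert (a l n <= / l). { unfold a. apply Rinv_le_contravar. lra. pose proof (kk_sq_ge1 n). lra. }
      assert (0 < / l) by (apply Rinv_0_lt_compat; lra).
      rewrite Rinv_pow by lra. nra.
    - rewrite sum_cte. unfold L, kk. rewrite S_INR. lra. }
  assert (HT : Series (fun j => a l (S M + j)%nat ^ 2) <= / L ^ 2 * Series (fun j => u (S M + j)%nat)).
  { rewrite <- Series_scal_l. apply Series_mono; auto.
    2: exact (ex_series_scal_l _ _ Etail).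
    intros j. unfold u. 
    assert (L <= kk (S M + j)) by (apply kk_mono; lia).
    assert (0 < / L ^ 2) by (apply Rinv_0_lt_compat; nra).
    assert (1 <= / L ^ 2 * kk (S M + j) ^ 2).
    { apply Rmult_le_reg_l with (L ^ 2). nra. rewrite <- Rmult_assoc, Rinv_r by nra. nra. }
    pose proof (pow2_ge_0 (a l (S M + j)%nat)). nra. }
  assert (Hs2 : s2 l <= / l ^ 2 * L + / L ^ 2 * NN l).
  { rewrite ES. assert (Series (fun j => u (S M + j)%nat) <= NN l) by (rewrite EN; lra).
    assert (0 < / L ^ 2) by (apply Rinv_0_lt_compat; nra). nra. }
  pose proof (s2_pos l Hl).
  assert (L * s2 l <= 5 * NN l).
  { apply Rle_trans with (L * (/ l ^ 2 * L + / L ^ 2 * NN l)). apply Rmult_le_compat_l; lra.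
    replace (L * (/ l ^ 2 * L + / L ^ 2 * NN l)) with (4 * / (4 * L ^ 2) + / L * NN l) by (unfold l; field; lra).
    assert (/ L <= 1). { rewrite <- Rinv_1. apply Rinv_le_contravar; lra. }
    assert (0 <= NN l) by (pose proof (Rinv_0_lt_compat (4 * L ^ 2) ltac:(nra)); lra).
    assert (/ L * NN l <= NN l) by nra. lra. }
  apply Rmult_le_reg_r with (5 * s2 l). lra.
  replace (NN l / s2 l * (5 * s2 l)) with (5 * NN l) by (field; lra).
  replace (L / 5 * (5 * s2 l)) with (L * s2 l) by field. lra.
Qed.

Lemma exists_sol D : 1 < D -> exists l, -1 < l /\ FF l = D.
Proof.
  intros HD. pose proof ZZ_pos.
  set (e := Rmin 1 ((D - 1) / (2 * ZZ + 1))).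
  assert (He : 0 < e) by (unfold e; apply Rmin_glb_lt; [lra| apply Rdiv_lt_0_compat; lra]).
  assert (He1 : e <= 1) by apply Rmin_l.
  assert (He2 : e <= (D - 1) / (2 * ZZ + 1)) by apply Rmin_r.
  set (lo := -1 + e).
  assert (Hlo : FF lo < D).
  { pose proof (FF_near lo ltac:(unfold lo; lra)). 
    replace (lo + 1) with e in H0 by (unfold lo; ring).
    assert (e * (2 * ZZ + 1) <= D - 1).
    { apply Rmult_le_reg_r with (/ (2 * ZZ + 1)). apply Rinv_0_lt_compat; lra.
      rewrite Rmult_assoc, Rinv_r, Rmult_1_r by lra. exact He2. }
    nra. }
  destruct (INR_unbounded (5 * D)) as [n Hn].
  set (hi := kk n ^ 2).
  assert (Hhi : D < FF hi).
  { pose proof (FF_big n). unfold kk in H0 at 1. fold hi in H0. lra. }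
  assert (Hlohi : lo < hi).
  { destruct (Rlt_le_dec lo hi) as [h|h]; auto. exfalso.
    destruct h as [h|h]. pose proof (FF_mono hi lo ltac:(unfold hi; pose proof (kk_sq_ge1 n); lra) h). lra.
    rewrite h in Hhi. lra. }
  destruct (Ranalysis5.IVT_interv (fun x => FF x - D) lo hi) as [z [Hz1 Hz2]].
  - intros x Hx. apply (continuity_pt_minus FF (fun _ => D)).
    apply FF_cont. unfold lo in Hx; lra. apply continuity_pt_const. intros u v; reflexivity.
  - exact Hlohi.
  - lra.
  - lra.
  - exists z. split. unfold lo in Hz1; lra. lra.
Qed.


Lemma Cmod_sq (z : C) : Cmod z ^ 2 = fst z ^ 2 + snd z ^ 2.
Proof. unfold Cmod. apply pow2_sqrt. nra. Qed.

Definition cp (c : Z -> C) (n : nat) : C := c (Z.of_nat (S n)).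
Definition cm (c : Z -> C) (n : nat) : C := c (- Z.of_nat (S n))%Z.
Definition qq (c : Z -> C) n := Cmod (cp c n) ^ 2 + Cmod (cm c n) ^ 2.
Definition kq (c : Z -> C) n := kk n ^ 2 * qq c n.
Definition rx (c : Z -> C) n := fst (cp c n) + fst (cm c n).
Definition iy (c : Z -> C) n := snd (cp c n) + snd (cm c n).

Lemma zs_q c : zsum0 (fun k => Cmod (c k) ^ 2) = Series (qq c).
Proof. reflexivity. Qed.

Lemma zs_kq c : zsum0 (fun k => IZR k ^ 2 * Cmod (c k) ^ 2) = Series (kq c).
Proof. unfold zsum0. apply Series_ext. intros n. unfold kq, qq, cp, cm. rewrite IZR_pos, IZR_neg. ring. Qed.

Lemma zsummable_ex f : zsummable0 f -> ex_series (fun n => f (Z.of_nat (S n)) + f (- Z.of_nat (S n))%Z).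
Proof.
  intros H. unfold zsummable0 in H. apply (ex_series_cmp _ _ (fun n => Rabs_triang _ _) H).
Qed.

Lemma ex_qq c : H1per_mean0 c -> ex_series (qq c).
Proof. intros [_ [H _]]. apply zsummable_ex in H. exact H. Qed.

Lemma ex_kq c : H1per_mean0 c -> ex_series (kq c).
Proof. intros [_ [_ H]]. apply zsummable_ex in H. refine (ex_series_ext _ _ _ H).
  intros n. cbv beta. unfold kq, qq, cp, cm. rewrite IZR_pos, IZR_neg.
  change ((kk n)^2 * Cmod (c (Z.of_nat (S n))) ^ 2 + (- kk n) ^ 2 * Cmod (c (- Z.of_nat (S n))%Z) ^ 2
    = kk n ^ 2 * (Cmod (c (Z.of_nat (S n))) ^ 2 + Cmod (c (- Z.of_nat (S n))%Z) ^ 2)). ring. Qed.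

Lemma abs_bound x K : 0 < K -> Rabs x <= (K * x ^ 2 + / K) / 2.
Proof.
  intros HK. assert (Hi : K * / K = 1) by (field; lra).
  assert (0 < / K) by (apply Rinv_0_lt_compat; lra).
  unfold Rabs; destruct (Rcase_abs x).
  - assert (0 <= (K * x + 1) ^ 2 * / K) by (apply Rmult_le_pos; [apply pow2_ge_0| lra]).
    replace ((K * x + 1) ^ 2 * / K) with (K * x ^ 2 * (K * / K) + 2 * x * (K * / K) + / K) in H0 by ring.
    rewrite Hi in H0. lra.
  - assert (0 <= (K * x - 1) ^ 2 * / K) by (apply Rmult_le_pos; [apply pow2_ge_0| lra]).
    replace ((K * x - 1) ^ 2 * / K) with (K * x ^ 2 * (K * / K) - 2 * x * (K * / K) + / K) in H0 by ring.
    rewrite Hi in H0. lra.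
Qed.

Lemma ex_rx c : H1per_mean0 c -> ex_series (rx c).
Proof.
  intros H. apply (ex_series_cmp _ (fun n => kq c n / 2 + / kk n ^ 2)).
  - intros n. unfold rx, kq, qq. rewrite !Cmod_sq.
    pose proof (kk_sq_ge1 n). set (K := kk n ^ 2) in *.
    pose proof (abs_bound (fst (cp c n)) K ltac:(lra)).
    pose proof (abs_bound (fst (cm c n)) K ltac:(lra)).
    pose proof (Rabs_triang (fst (cp c n)) (fst (cm c n))).
    pose proof (pow2_ge_0 (snd (cp c n))). pose proof (pow2_ge_0 (snd (cm c n))). nra.
  - apply (ex_series_plus (fun n => kq c n / 2)). 
    apply ex_series_scal_r. apply ex_kq; auto. apply ex_series_invsq.
Qed.

Lemma ex_iy c : H1per_mean0 c -> ex_series (iy c).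
Proof.
  intros H. apply (ex_series_cmp _ (fun n => kq c n / 2 + / kk n ^ 2)).
  - intros n. unfold iy, kq, qq. rewrite !Cmod_sq.
    pose proof (kk_sq_ge1 n). set (K := kk n ^ 2) in *.
    pose proof (abs_bound (snd (cp c n)) K ltac:(lra)).
    pose proof (abs_bound (snd (cm c n)) K ltac:(lra)).
    pose proof (Rabs_triang (snd (cp c n)) (snd (cm c n))).
    pose proof (pow2_ge_0 (fst (cp c n))). pose proof (pow2_ge_0 (fst (cm c n))). nra.
  - apply (ex_series_plus (fun n => kq c n / 2)). 
    apply ex_series_scal_r. apply ex_kq; auto. apply ex_series_invsq.
Qed.

Lemma quad c l al be : H1per_mean0 c -> -1 < l ->
  0 <= l * Series (qq c) + Series (kq c) - 2 * al * Series (rx c) - 2 * be * Series (iy c)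
       + (al ^ 2 + be ^ 2) * (2 * s1 l).
Proof.
  intros Hc Hl.
  set (t := fun n => (l + kk n ^ 2) * ((fst (cp c n) - al * a l n) ^ 2 + (snd (cp c n) - be * a l n) ^ 2
     + (fst (cm c n) - al * a l n) ^ 2 + (snd (cm c n) - be * a l n) ^ 2)).
  assert (Eq : forall n, t n = ((l * qq c n + kq c n) + ((- 2 * al) * rx c n + (- 2 * be) * iy c n))
     + ((al ^ 2 + be ^ 2) * 2) * a l n).
  { intros n. unfold t, kq, qq, rx, iy; cbv beta. rewrite !Cmod_sq. pose proof (a_w l n Hl).
    set (w := l + kk n ^ 2) in *. set (A := a l n) in *.
    replace (kk n ^ 2) with (w - l) by (unfold w; ring).
    transitivity (w * ((fst (cp c n))^2 + (snd (cp c n))^2 + (fst (cm c n))^2 + (snd (cm c n))^2)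
      - 2 * al * (fst (cp c n) + fst (cm c n)) * (A * w) - 2 * be * (snd (cp c n) + snd (cm c n)) * (A * w)
      + (al^2 + be^2) * 2 * A * (A * w)). clearbody w A. ring. rewrite H. ring. }
  assert (E1 : ex_series (fun n => l * qq c n + kq c n)) by
    exact (ex_series_plus _ _ (ex_series_scal_l l _ (ex_qq c Hc)) (ex_kq c Hc)).
  assert (E2 : ex_series (fun n => (- 2 * al) * rx c n + (- 2 * be) * iy c n)) by
    exact (ex_series_plus _ _ (ex_series_scal_l _ _ (ex_rx c Hc)) (ex_series_scal_l _ _ (ex_iy c Hc))).
  assert (E3 : ex_series (fun n => ((al ^ 2 + be ^ 2) * 2) * a l n)) by exact (ex_series_scal_l _ _ (ex_a l Hl)).
  assert (E12 : ex_series (fun n => (l * qq c n + kq c n) + ((- 2 * al) * rx c n + (- 2 * be) * iy c n)))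
    by exact (ex_series_plus _ _ E1 E2).
  assert (Et : ex_series t).
  { eapply ex_series_ext. intros n; symmetry; apply Eq. exact (ex_series_plus _ _ E12 E3). }
  assert (0 <= Series t).
  { apply Series_nonneg; auto. intros n. unfold t. pose proof (w_pos l n Hl).
    apply Rmult_le_pos. lra. repeat apply Rplus_le_le_0_compat; apply pow2_ge_0. }
  rewrite (Series_ext _ _ Eq) in H.
  assert (F1 : ex_series (fun n => l * qq c n)) by exact (ex_series_scal_l _ _ (ex_qq c Hc)).
  assert (F2 := ex_kq c Hc).
  assert (F3 : ex_series (fun n => (- 2 * al) * rx c n)) by exact (ex_series_scal_l _ _ (ex_rx c Hc)).
  assert (F4 : ex_series (fun n => (- 2 * be) * iy c n)) by exact (ex_series_scal_l _ _ (ex_iy c Hc)).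
  repeat (rewrite Series_plus in H by assumption).
  rewrite !Series_scal_l in H. unfold s1. lra.
Qed.

Lemma fourier0 c : fourier_eval c 0 = (Series (rx c), Series (iy c)).
Proof.
  unfold fourier_eval, zsum0. f_equal; apply Series_ext; intros n; unfold rx, iy, cp, cm;
  rewrite !Rmult_0_r, cos_0, sin_0;
  destruct (c (Z.of_nat (S n))), (c (- Z.of_nat (S n))%Z); unfold Re, Im, Cmult; simpl; ring.
Qed.

Lemma core c l : H1per_mean0 c -> -1 < l ->
  Cmod (fourier_eval c 0) ^ 2 <= (l * L2norm2 c + L2norm2_deriv c) / PI * s1 l.
Proof.
  intros Hc Hl. rewrite fourier0, Cmod_sq. simpl fst; simpl snd.
  unfold L2norm2, L2norm2_deriv. rewrite zs_q, zs_kq.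
  set (X := Series (rx c)). set (Y := Series (iy c)).
  set (Sz := 2 * s1 l). assert (HS : 0 < Sz) by (unfold Sz; pose proof (s1_pos l Hl); lra).
  pose proof (quad c l (X / Sz) (Y / Sz) Hc Hl). fold X Y Sz in H.
  set (A := l * Series (qq c) + Series (kq c)) in *.
  replace (A - 2 * (X / Sz) * X - 2 * (Y / Sz) * Y + ((X / Sz) ^ 2 + (Y / Sz) ^ 2) * Sz)
    with (A - (X ^ 2 + Y ^ 2) / Sz) in H by (field; lra).
  pose proof PI_RGT_0.
  replace ((l * (2 * PI * Series (qq c)) + 2 * PI * Series (kq c)) / PI * s1 l) with (A * Sz)
    by (unfold A, Sz; field; lra).
  assert ((X ^ 2 + Y ^ 2) / Sz <= A) by lra.
  apply Rmult_le_reg_r with (/ Sz). apply Rinv_0_lt_compat; auto.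
  rewrite Rmult_assoc, Rinv_r, Rmult_1_r by lra. exact H1.
Qed.


Lemma lub_max (S : R -> Prop) v0 : S v0 -> (forall v, S v -> v <= v0) -> Lub_Rbar S = Finite v0.
Proof.
  intros H0 H. apply is_lub_Rbar_unique. split.
  - intros x Hx. simpl. apply H; auto.
  - intros b Hb. apply Hb. auto.
Qed.

Lemma fin_supp (u : nat -> R) : (forall n, u (S n) = 0) -> ex_series u /\ Series u = u 0%nat.
Proof.
  intros H.
  assert (E : ex_series (fun n => u (S n))).
  { refine (ex_series_ext (fun n => 0 * / kk n ^ 2) _ _ (ex_series_scal_l 0 _ ex_series_invsq)).
    intros n. rewrite H. exact (Rmult_0_l (/ kk n ^ 2)). }
  assert (E' : ex_series u) by exact (proj2 (ex_series_incr_1 u) E).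
  split; auto. rewrite Series_incr_1 by auto.
  rewrite (Series_ext _ (fun _ => 0)) by auto. rewrite Series_zero. ring.
Qed.

Lemma Cmod_real x : Cmod (x, 0) ^ 2 = x ^ 2.
Proof. rewrite Cmod_sq. simpl. ring. Qed.

Definition mu (l : R) := / sqrt (4 * PI * s2 l).
Definition c2 (l : R) (k : Z) : C := if Req_dec_T (IZR k) 0 then (0, 0) else ((mu l) * / (l + IZR k ^ 2), 0).

Lemma mu2 (l : R) (Hl : -1 < l) : (mu l) ^ 2 = / (4 * PI * s2 l).
Proof. unfold mu. pose proof (s2_pos l Hl). pose proof PI_RGT_0.
  rewrite <- Rinv_pow. rewrite pow2_sqrt. reflexivity. nra.
  apply Rgt_not_eq, sqrt_lt_R0. nra. Qed.

Lemma cp2 (l : R) (Hl : -1 < l) n : cp (c2 l) n = ((mu l) * a l n, 0).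
Proof. unfold cp, c2. rewrite IZR_pos. destruct (Req_dec_T (kk n) 0).
  pose proof (kk_ge1 n); lra. reflexivity. Qed.

Lemma cm2 (l : R) (Hl : -1 < l) n : cm (c2 l) n = ((mu l) * a l n, 0).
Proof. unfold cm, c2. rewrite IZR_neg. destruct (Req_dec_T (- kk n) 0).
  pose proof (kk_ge1 n); lra. unfold a. replace ((- kk n) ^ 2) with (kk n ^ 2) by ring. reflexivity. Qed.

Lemma c2_H1 (l : R) (Hl : -1 < l) : H1per_mean0 (c2 l).
Proof.
  split; [|split].
  - unfold c2. destruct (Req_dec_T (IZR 0) 0). reflexivity. exfalso; auto.
  - unfold zsummable0.
    refine (ex_series_ext (fun n => (2 * (mu l) ^ 2) * a l n ^ 2) _ _ (ex_series_scal_l _ _ (ex_a2 l Hl))).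
    intros n. fold (cp (c2 l) n) (cm (c2 l) n). rewrite (cp2 l Hl), (cm2 l Hl), !Cmod_real.
    rewrite !Rabs_right by (apply Rle_ge, pow2_ge_0). unfold scal; simpl; unfold mult; simpl. ring.
  - unfold zsummable0.
    refine (ex_series_ext (fun n => (2 * (mu l) ^ 2) * (kk n ^ 2 * a l n ^ 2)) _ _ (ex_series_scal_l _ _ (ex_ka2 l Hl))).
    intros n. fold (cp (c2 l) n) (cm (c2 l) n). rewrite (cp2 l Hl), (cm2 l Hl), !Cmod_real, IZR_pos, IZR_neg.
    rewrite !Rabs_right by (apply Rle_ge, Rmult_le_pos; apply pow2_ge_0). unfold scal; simpl; unfold mult; simpl. ring.
Qed.

Lemma c2_L2 (l : R) (Hl : -1 < l) : L2norm2 (c2 l) = 1.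
Proof.
  unfold L2norm2. rewrite zs_q.
  rewrite (Series_ext _ (fun n => (2 * (mu l) ^ 2) * a l n ^ 2)).
  2: { intros n. unfold qq. rewrite (cp2 l Hl), (cm2 l Hl), !Cmod_real. ring. }
  rewrite Series_scal_l. fold (s2 l). rewrite (mu2 l Hl). pose proof (s2_pos l Hl). pose proof PI_RGT_0.
  field. lra.
Qed.

Lemma c2_L2d (l : R) (Hl : -1 < l) : L2norm2_deriv (c2 l) = FF l.
Proof.
  unfold L2norm2_deriv. rewrite zs_kq.
  rewrite (Series_ext _ (fun n => (2 * (mu l) ^ 2) * (kk n ^ 2 * a l n ^ 2))).
  2: { intros n. unfold kq, qq. rewrite (cp2 l Hl), (cm2 l Hl), !Cmod_real. ring. }
  rewrite Series_scal_l. fold (NN l). rewrite (mu2 l Hl), FF_NN by auto. pose proof (s2_pos l Hl). pose proof PI_RGT_0.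
  field. lra.
Qed.

Lemma c2_val (l : R) (Hl : -1 < l) : Cmod (fourier_eval (c2 l) 0) ^ 2 = s1 l ^ 2 / (PI * s2 l).
Proof.
  rewrite fourier0, Cmod_sq. simpl fst; simpl snd.
  rewrite (Series_ext (rx (c2 l)) (fun n => (2 * (mu l)) * a l n)).
  2: { intros n. unfold rx. rewrite (cp2 l Hl), (cm2 l Hl). simpl. ring. }
  rewrite (Series_ext (iy (c2 l)) (fun n => 0)).
  2: { intros n. unfold iy. rewrite (cp2 l Hl), (cm2 l Hl). simpl. ring. }
  rewrite Series_scal_l, Series_zero. fold (s1 l).
  replace ((2 * (mu l) * s1 l) ^ 2 + 0 ^ 2) with (4 * (mu l) ^ 2 * s1 l ^ 2) by ring.
  rewrite (mu2 l Hl). pose proof (s2_pos l Hl). pose proof PI_RGT_0. field. lra.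
Qed.


Lemma part2 D l : 1 < D -> -1 < l -> Dfun l = D -> VV D = Finite (Vformula l).
Proof.
  intros HD Hl HDl. rewrite Dfun_eq in HDl by auto.
  unfold VV. rewrite Vformula_eq by auto. apply lub_max.
  - exists (c2 l). split. apply c2_H1; auto. split. apply c2_L2; auto. split.
    rewrite c2_L2d; auto. symmetry; apply c2_val; auto.
  - intros v [c [Hc [H1 [H2 Hv]]]]. subst v.
    eapply Rle_trans. apply (core c l Hc Hl). rewrite H1, H2, <- HDl.
    unfold FF. pose proof (s2_pos l Hl). pose proof PI_RGT_0.
    right. field. lra.
Qed.


Lemma kkS n : kk (S n) = kk n + 1.
Proof. unfold kk. rewrite S_INR. ring. Qed.

Lemma a_tail_le l n : -1 < l -> a l (S n) <= / kk n ^ 2.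
Proof.
  intros H. unfold a. rewrite kkS. pose proof (kk_ge1 n).
  apply Rinv_le_contravar. nra. nra.
Qed.

Lemma a_tail_le1 l n : -1 < l -> a l (S n) <= 1.
Proof.
  intros H. unfold a. rewrite kkS. pose proof (kk_ge1 n). rewrite <- Rinv_1.
  apply Rinv_le_contravar. lra. nra.
Qed.

Lemma s1_bounds l : -1 < l -> / (l + 1) <= s1 l <= / (l + 1) + ZZ.
Proof.
  intros H. unfold s1. rewrite Series_incr_1 by (apply ex_a; auto).
  assert (a l 0 = / (l + 1)) by (unfold a; rewrite kk0; f_equal; ring). rewrite H0.
  assert (E : ex_series (fun k => a l (S k))) by exact (proj1 (ex_series_incr_1 (a l)) (ex_a l H)).
  split.
  - assert (0 <= Series (fun k => a l (S k))). apply Series_nonneg; auto. intros; left; apply a_pos; auto. lra.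
  - assert (Series (fun k => a l (S k)) <= ZZ). apply Series_mono; auto. intros; apply a_tail_le; auto.
    apply ex_series_invsq. lra.
Qed.

Lemma s2_bounds l : -1 < l -> / (l + 1) ^ 2 <= s2 l <= / (l + 1) ^ 2 + ZZ.
Proof.
  intros H. unfold s2. rewrite Series_incr_1 by (apply ex_a2; auto).
  assert (a l 0 ^ 2 = / (l + 1) ^ 2). { unfold a; rewrite kk0. rewrite Rinv_pow by lra. f_equal. f_equal. ring. }
  rewrite H0.
  assert (E : ex_series (fun k => a l (S k) ^ 2)) by exact (proj1 (ex_series_incr_1 (fun n => a l n ^ 2)) (ex_a2 l H)).
  split.
  - assert (0 <= Series (fun k => a l (S k) ^ 2)). apply Series_nonneg; auto. intros; apply pow2_ge_0. lra.
  - assert (Series (fun k => a l (S k) ^ 2) <= ZZ). apply Series_mono; auto.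
    intros n. pose proof (a_tail_le l n H). pose proof (a_tail_le1 l n H). pose proof (a_pos l (S n) H). nra.
    apply ex_series_invsq. lra.
Qed.

Lemma V_near l : -1 < l -> l + 1 <= 1 ->
  Rabs (Vformula l - / PI) <= (l + 1) * (3 * ZZ + ZZ ^ 2) / PI.
Proof.
  intros H He. rewrite Vformula_eq by auto.
  pose proof (s1_bounds l H). pose proof (s2_bounds l H). pose proof ZZ_pos. pose proof PI_RGT_0.
  set (e := l + 1) in *. assert (He0 : 0 < e) by (unfold e; lra).
  set (T1 := s1 l - / e). set (T2 := s2 l - / e ^ 2).
  assert (HT1 : 0 <= T1 <= ZZ) by (unfold T1; lra).
  assert (HT2 : 0 <= T2 <= ZZ) by (unfold T2; lra).
  replace (s1 l) with ((1 + e * T1) / e) by (unfold T1; field; lra).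
  replace (s2 l) with ((1 + e ^ 2 * T2) / e ^ 2) by (unfold T2; field; lra).
  assert (HD : 1 <= 1 + e ^ 2 * T2) by nra.
  replace (((1 + e * T1) / e) ^ 2 / (PI * ((1 + e ^ 2 * T2) / e ^ 2)) - / PI)
    with ((2 * e * T1 + e ^ 2 * T1 ^ 2 - e ^ 2 * T2) / (PI * (1 + e ^ 2 * T2))) by (field; lra).
  rewrite Rabs_div by nra. rewrite (Rabs_right (PI * _)) by nra.
  apply Rle_trans with (Rabs (2 * e * T1 + e ^ 2 * T1 ^ 2 - e ^ 2 * T2) / PI).
  { unfold Rdiv. apply Rmult_le_compat_l. apply Rabs_pos. apply Rinv_le_contravar; nra. }
  unfold Rdiv. apply Rmult_le_compat_r. left; apply Rinv_0_lt_compat; lra.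
  apply Rabs_le. split.
  - assert (e ^ 2 * T2 <= e * ZZ) by nra. assert (0 <= 2 * e * T1 + e ^ 2 * T1 ^ 2) by nra. nra.
  - assert (e * T1 <= e * ZZ) by nra. assert (e ^ 2 * T1 ^ 2 <= e * ZZ ^ 2).
    { assert (e * T1 ^ 2 <= ZZ ^ 2) by nra. nra. }
    assert (0 <= e ^ 2 * T2) by nra. nra.
Qed.

Lemma V_lim : filterlim Vformula (at_right (-1)) (locally (/ PI)).
Proof.
  intros P [eps HP]. pose proof ZZ_pos. pose proof PI_RGT_0.
  set (C := (3 * ZZ + ZZ ^ 2) / PI). assert (HC : 0 <= C) by (unfold C; apply Rmult_le_pos; [nra| left; apply Rinv_0_lt_compat; lra]).
  assert (Hd : 0 < Rmin 1 (eps / (C + 1))) by (apply Rmin_glb_lt; [lra| apply Rdiv_lt_0_compat; [apply cond_pos| lra]]).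
  exists (mkposreal _ Hd). intros y Hy Hy1. apply HP.
  change (Rabs (y - -1) < Rmin 1 (eps / (C + 1))) in Hy.
  change (Rabs (Vformula y - / PI) < eps).
  assert (Hy2 : y + 1 < Rmin 1 (eps / (C + 1))) by (rewrite Rabs_right in Hy by lra; lra).
  assert (y + 1 <= 1) by (pose proof (Rmin_l 1 (eps / (C + 1))); lra).
  assert (y + 1 < eps / (C + 1)) by (pose proof (Rmin_r 1 (eps / (C + 1))); lra).
  eapply Rle_lt_trans. apply V_near; auto.
  replace ((y + 1) * (3 * ZZ + ZZ ^ 2) / PI) with ((y + 1) * C) by (unfold C; field; lra).
  assert ((y + 1) * (C + 1) < eps).
  { apply Rmult_lt_reg_r with (/ (C + 1)). apply Rinv_0_lt_compat; lra.
    replace ((y + 1) * (C + 1) * / (C + 1)) with (y + 1) by (field; lra). exact H2. }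
  pose proof (cond_pos eps). nra.
Qed.

Definition hh := / (2 * sqrt PI).
Definition c1 (k : Z) : C := if Req_dec_T (IZR k ^ 2) 1 then (hh, 0) else (0, 0).

Lemma hh2 : hh ^ 2 = / (4 * PI).
Proof. unfold hh. pose proof PI_RGT_0. rewrite <- Rinv_pow.
  replace ((2 * sqrt PI) ^ 2) with (4 * (sqrt PI) ^ 2) by ring. rewrite pow2_sqrt; lra.
  apply Rgt_not_eq. pose proof (sqrt_lt_R0 PI H). lra. Qed.

Lemma cp1 n : cp c1 n = if Nat.eqb n 0 then (hh, 0) else (0, 0).
Proof. unfold cp, c1. rewrite IZR_pos. destruct n.
  - rewrite kk0. destruct (Req_dec_T (1 ^ 2) 1). reflexivity. exfalso; apply n; ring.
  - simpl Nat.eqb. rewrite kkS. pose proof (kk_ge1 n). destruct (Req_dec_T ((kk n + 1) ^ 2) 1). nra. reflexivity. Qed.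

Lemma cm1 n : cm c1 n = if Nat.eqb n 0 then (hh, 0) else (0, 0).
Proof. unfold cm, c1. rewrite IZR_neg. replace ((- kk n) ^ 2) with (kk n ^ 2) by ring. destruct n.
  - rewrite kk0. destruct (Req_dec_T (1 ^ 2) 1). reflexivity. exfalso; apply n; ring.
  - simpl Nat.eqb. rewrite kkS. pose proof (kk_ge1 n). destruct (Req_dec_T ((kk n + 1) ^ 2) 1). nra. reflexivity. Qed.

Lemma c1_H1 : H1per_mean0 c1.
Proof.
  split; [|split].
  - unfold c1. destruct (Req_dec_T (IZR 0 ^ 2) 1). exfalso. simpl in e. lra. reflexivity.
  - unfold zsummable0. apply fin_supp. intros n. fold (cp c1 (S n)) (cm c1 (S n)). rewrite cp1, cm1. cbn [Nat.eqb].
    rewrite Cmod_real. replace (0 ^ 2) with 0 by ring. rewrite Rabs_R0. ring.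
  - unfold zsummable0. apply fin_supp. intros n. fold (cp c1 (S n)) (cm c1 (S n)). rewrite cp1, cm1. cbn [Nat.eqb].
    rewrite Cmod_real. replace (0 ^ 2) with 0 by ring. rewrite Rmult_0_r, Rmult_0_r, Rabs_R0. ring.
Qed.

Lemma c1_L2 : L2norm2 c1 = 1.
Proof.
  unfold L2norm2. rewrite zs_q.
  assert (Hs : forall n, qq c1 (S n) = 0) by (intros n; unfold qq; rewrite cp1, cm1; cbn [Nat.eqb]; rewrite Cmod_real; ring).
  rewrite (proj2 (fin_supp (qq c1) Hs)).
  unfold qq. rewrite cp1, cm1. cbn [Nat.eqb]. rewrite Cmod_real, hh2. pose proof PI_RGT_0. field. lra.
Qed.

Lemma c1_L2d : L2norm2_deriv c1 = 1.
Proof.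
  unfold L2norm2_deriv. rewrite zs_kq.
  assert (Hs : forall n, kq c1 (S n) = 0) by (intros n; unfold kq, qq; rewrite cp1, cm1; cbn [Nat.eqb]; rewrite Cmod_real; ring).
  rewrite (proj2 (fin_supp (kq c1) Hs)).
  unfold kq, qq. rewrite cp1, cm1, kk0. cbn [Nat.eqb]. rewrite Cmod_real, hh2. pose proof PI_RGT_0. field. lra.
Qed.

Lemma c1_val : Cmod (fourier_eval c1 0) ^ 2 = / PI.
Proof.
  rewrite fourier0, Cmod_sq. simpl fst; simpl snd.
  assert (Hs1 : forall n, rx c1 (S n) = 0) by (intros n; unfold rx; rewrite cp1, cm1; cbn [Nat.eqb fst]; ring).
  assert (Hs2 : forall n, iy c1 (S n) = 0) by (intros n; unfold iy; rewrite cp1, cm1; cbn [Nat.eqb snd]; ring).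
  rewrite (proj2 (fin_supp (rx c1) Hs1)).
  rewrite (proj2 (fin_supp (iy c1) Hs2)).
  unfold rx, iy. rewrite cp1, cm1. cbn [Nat.eqb fst snd].
  replace ((hh + hh) ^ 2 + (0 + 0) ^ 2) with (4 * hh ^ 2) by ring. rewrite hh2. pose proof PI_RGT_0. field. lra.
Qed.

Lemma part3 : VV 1 = Finite (/ PI).
Proof.
  unfold VV. apply lub_max.
  - exists c1. split. apply c1_H1. split. apply c1_L2. split. apply c1_L2d. symmetry; apply c1_val.
  - intros v [c [Hc [H1 [H2 Hv]]]]. subst v.
    set (v := Cmod (fourier_eval c 0) ^ 2).
    pose proof ZZ_pos. pose proof PI_RGT_0.
    assert (B : forall e, 0 < e -> v <= (1 + e * ZZ) / PI).
    { intros e He. pose proof (core c (e - 1) Hc ltac:(lra)). rewrite H1, H2 in H3.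
      pose proof (s1_bounds (e - 1) ltac:(lra)). replace (e - 1 + 1) with e in H4 by ring.
      eapply Rle_trans. exact H3. replace ((e - 1) * 1 + 1) with e by ring.
      unfold Rdiv. rewrite Rmult_assoc. rewrite (Rmult_comm (/ PI)), <- Rmult_assoc.
      apply Rmult_le_compat_r. left; apply Rinv_0_lt_compat; lra.
      destruct H4. apply Rle_trans with (e * (/ e + ZZ)). apply Rmult_le_compat_l; lra.
      right. field. lra. }
    destruct (Rle_dec v (/ PI)) as [h|h]; auto. exfalso.
    assert (Hv : / PI < v) by lra.
    set (e := (v - / PI) * PI / (2 * (ZZ + 1))).
    assert (He : 0 < e) by (unfold e; apply Rdiv_lt_0_compat; nra).
    specialize (B e He).
    assert ((1 + e * ZZ) / PI < v).
    { replace ((1 + e * ZZ) / PI) with (/ PI + (v - / PI) * (ZZ / (2 * (ZZ + 1)))) by (unfold e; field; lra).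
      assert (ZZ / (2 * (ZZ + 1)) < 1).
      { apply Rmult_lt_reg_r with (2 * (ZZ + 1)). lra. unfold Rdiv. rewrite Rmult_assoc, Rinv_l by lra. lra. }
      assert (0 <= ZZ / (2 * (ZZ + 1))) by (apply Rmult_le_pos; [lra| left; apply Rinv_0_lt_compat; lra]).
      nra. }
    lra.
Qed.

Theorem lemma2p1 :
  (* for D > 1 the equation D(lambda) = D has a unique solution lambda > -1 *)
  (forall D : R, 1 < D -> exists! l : R, -1 < l /\ Dfun l = D) /\
  (* and V(D) is given by the formula at that lambda *)
  (forall D l : R, 1 < D -> -1 < l -> Dfun l = D -> VV D = Finite (Vformula l)) /\
  (* D = 1 corresponds to lambda = -1: V(1) is the limit of the formula as lambda -> -1+ *)
  (exists L : R, VV 1 = Finite L /\ filterlim Vformula (at_right (-1)) (locally L)) /\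
  (* lambda(D) -> -1 as D -> 1+, lambda(D) -> +oo as D -> +oo *)
  (forall lam : R -> R,
     (forall D : R, 1 < D -> -1 < lam D /\ Dfun (lam D) = D) ->
     filterlim lam (at_right 1) (locally (-1)) /\
     filterlim lam (Rbar_locally p_infty) (Rbar_locally p_infty)).
Proof.
  split; [|split; [|split]].
  - intros D HD. destruct (exists_sol D HD) as [l [Hl HF]]. exists l. split.
    + split; auto. rewrite Dfun_eq; auto.
    + intros l' [Hl' HF']. rewrite Dfun_eq in HF' by auto.
      destruct (Rtotal_order l l') as [h|[h|h]]; auto.
      * pose proof (FF_mono l l' Hl h). lra.
      * pose proof (FF_mono l' l Hl' h). lra.
  - exact part2.
  - exists (/ PI). split. exact part3. exact V_lim.
  - intros lam Hlam. split.
    + intros P [eps HP].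
      set (e := Rmin (eps / 2) 1).
      assert (He : 0 < e) by (unfold e; apply Rmin_glb_lt; [pose proof (cond_pos eps); lra| lra]).
      assert (He2 : e < eps) by (unfold e; pose proof (Rmin_l (eps/2) 1); pose proof (cond_pos eps); lra).
      set (p := -1 + e). assert (Hp : -1 < p) by (unfold p; lra).
      pose proof (FF_gt1 p Hp).
      assert (Hd : 0 < FF p - 1) by lra.
      exists (mkposreal _ Hd). intros y Hy Hy1. apply HP.
      change (Rabs (y - 1) < FF p - 1) in Hy.
      change (Rabs (lam y - -1) < eps).
      destruct (Hlam y Hy1) as [Hl HF]. rewrite Dfun_eq in HF by auto.
      assert (y < FF p) by (rewrite Rabs_right in Hy by lra; lra).
      assert (lam y < p).
      { destruct (Rlt_le_dec (lam y) p) as [h|h]; auto. destruct h as [h|h].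
        pose proof (FF_mono p (lam y) Hp h). lra. rewrite <- h in HF. lra. }
      rewrite Rabs_right by lra. unfold p in H1. lra.
    + intros P [M HP]. set (p := Rmax M 0). assert (Hp : -1 < p) by (unfold p; pose proof (Rmax_r M 0); lra).
      exists (Rmax 1 (FF p)). intros D HD.
      assert (HD1 : 1 < D) by (pose proof (Rmax_l 1 (FF p)); lra).
      assert (HD2 : FF p < D) by (pose proof (Rmax_r 1 (FF p)); lra).
      destruct (Hlam D HD1) as [Hl HF]. rewrite Dfun_eq in HF by auto.
      apply HP.
      assert (p < lam D).
      { destruct (Rlt_le_dec p (lam D)) as [h|h]; auto. destruct h as [h|h].
        pose proof (FF_mono (lam D) p Hl h). lra. rewrite h in HF. lra. }
      pose proof (Rmax_l M 0). unfold p in H. lra.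
Qed.
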